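(* Let $q\in\mathbb{C}[x_0,\dots,x_3]_2$ be a quadratic form of rank four, let $[l_1],[l_2]\in\mathbb{P}(S_1)$ and assume that $q_{l_1}(l_2^2)=0$ (equivalently $q_{l_2}(l_1^2)=0$). Then $p_{l_2}(l_1)=p_{l_1}(l_2)=0$ if and only if $[l_1]\in Q^{-1}$ or $[l_2]\in Q^{-1}$.
   Context: $S=\mathbb{C}[x_0,\dots,x_3]$, $T=\mathbb{C}[y_0,\dots,y_3]$; $T$ acts on $S$ and $S$ acts on $T$ by differentiation. For $l\in S_1$, $q_l\in T_2$ is the unique form with $q_l(q^2)=l^2$. $q^{-1}\in T_2$ is the inverse quadric (the quadric with $S_1\to T_1$, $l\mapsto l(q^{-1})$, inverse to $T_1\to S_1$, $g\mapsto g(q)$), $Q^{-1}=\{q^{-1}=0\}$, and $p_l=l(q^{-1})\in T_1$ (so $p_{l_2}(l_1)\in\mathbb{C}$ is $p_{l_2}$ applied to $l_1$). *)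

(* Defs.v *)
From HB Require Import structures.
From mathcomp Require Import all_boot all_order all_algebra.
From mathcomp Require Import mpoly.
From mathcomp Require Import complex.
From Stdlib Require Import ClassicalEpsilon.
Set Implicit Arguments. Unset Strict Implicit. Unset Printing Implicit Defensive.
Import Order.TTheory GRing.Theory Num.Theory.
Local Open Scope ring_scope.

Section Apolarity.
Variable K : fieldType.

(* Both S = K[x_0..x_3] and T = K[y_0..y_3] are modelled by {mpoly K[4]};
   the variable x_i of S is dual to the variable y_i of T. *)
Definition poly4 := {mpoly K[4]}.

(* Action of g by differentiation on f:  g(f) = g(d/dz_0,...,d/dz_3) f.
   Used both for T acting on S and for S acting on T. *)
Definition apolar (g f : {mpoly K[4]}) : {mpoly K[4]} :=
  \sum_(m <- msupp g) g@_m *: (f^`M[m]).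

Definition hessian (q : {mpoly K[4]}) : 'M[K]_4 :=
  \matrix_(i < 4, j < 4) ((q^`M(i))^`M(j))@_0.

Definition quad_rank4 (q : {mpoly K[4]}) : Prop :=
  q \is 2.-homog /\ \rank (hessian q) = 4%N.

Definition q_l (q l : {mpoly K[4]}) : {mpoly K[4]} :=
  epsilon (inhabits 0)
    (fun g : {mpoly K[4]} => g \is 2.-homog /\ apolar g (q ^+ 2) = l ^+ 2).

Definition qinv (q : {mpoly K[4]}) : {mpoly K[4]} :=
  epsilon (inhabits 0)
    (fun g : {mpoly K[4]} => g \is 2.-homog /\
       (forall l : {mpoly K[4]}, l \is 1.-homog -> apolar (apolar l g) q = l) /\
       (forall h : {mpoly K[4]}, h \is 1.-homog -> apolar (apolar h q) g = h)).

Definition p_l (q l : {mpoly K[4]}) : {mpoly K[4]} := apolar l (qinv q).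

(* [l] in Q^{-1} = {q^{-1} = 0}: q^{-1} vanishes at the point of P(S_1)
   with coordinates (coefficients of l in the basis x_0..x_3, dual to y_i). *)
Definition in_Qinv (q l : {mpoly K[4]}) : Prop :=
  (qinv q).@[fun i => l@_U_(i)] = 0.

End Apolarity.

(* Main.v *)
Require Import Defs.
From HB Require Import structures.
From mathcomp Require Import all_boot all_order all_algebra.
From mathcomp Require Import mpoly ssrcomplements.
From mathcomp Require Import complex zify ring lra.
Import Order.TTheory GRing.Theory Num.Theory.
Local Open Scope ring_scope.
Set Implicit Arguments. Unset Strict Implicit. Unset Printing Implicit Defensive.

Section Work.
Variable K : fieldType.
Hypothesis natK : forall n : nat, (n.+1)%:R != 0 :> K.
Notation P := {mpoly K[4]}.

Lemma apolarwE (g f : P) k : (msize g <= k)%N ->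
  apolar g f = \sum_(m : 'X_{1..4 < k}) g@_m *: f^`M[m].
Proof.
pose I : subFinType _ := 'X_{1..4 < k}.
move=> le_pk; rewrite /apolar (big_mksub I) /=; first last.
  by move=> x /msize_mdeg_lt/leq_trans/(_ le_pk).
  by rewrite msupp_uniq.
rewrite big_rmcond //= => j /memN_msupp_eq0 ->.
by rewrite scale0r.
Qed.

Definition apL (f : P) (g : P) := apolar g f.

Lemma apL_is_linear f : linear (apL f).
Proof.
move=> c p q; rewrite /apL.
pose k := (maxn (msize p) (msize q) + msize (c *: p + q))%N.
rewrite !(@apolarwE _ _ k); try by rewrite /k; lia.
rewrite scaler_sumr -big_split /=; apply/eq_bigr=> m _.
by rewrite mcoeffD mcoeffZ scalerDl scalerA.
Qed.

HB.instance Definition _ f := GRing.isLinear.Build K P P _ (apL f) (apL_is_linear f).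

Lemma apolarX (m : 'X_{1..4}) (f : P) : apolar 'X_[m] f = f^`M[m].
Proof. by rewrite /apolar msuppX big_seq1 mcoeffX eqxx scale1r. Qed.

Lemma apolarXU i (f : P) : apolar 'X_i f = f^`M(i).
Proof. by rewrite -mderivmU1m; apply: apolarX. Qed.

Lemma apolarXX i j (f : P) : apolar ('X_i * 'X_j) f = f^`M(i)^`M(j).
Proof. by rewrite -mpolyXD apolarX mderivmDm !mderivmU1m. Qed.

Lemma apolarC c (f : P) : apolar c%:MP f = c *: f.
Proof.
rewrite -[c%:MP]mulr1 -mpolyX0 mul_mpolyC.
change (apL f (c *: 'X_[0]) = c *: f).
by rewrite linearZ /= [apL _ _]apolarX mderivm0m.
Qed.

Lemma submm' (m : 'X_{1..4}) : (m - m)%MM = 0%MM.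
Proof. by apply/mnmP=> i; rewrite !mnmE subnn. Qed.

Lemma dX i k : ('X_i : P)^`M(k) = ((i == k)%:R)%:MP.
Proof.
rewrite mderivX mnm1E; case: eqP => [->|_].
  by rewrite submm' mpolyX0 scale1r.
by rewrite scale0r.
Qed.

Lemma dC c k : (c%:MP : P)^`M(k) = 0.
Proof. exact: mderivC. Qed.

Definition lin (v : 'cV[K]_4) : P := \sum_i v i 0 *: 'X_i.
Definition quad (c : 'M[K]_4) : P := \sum_i \sum_j c i j *: ('X_i * 'X_j).

Lemma lin_is_linear : linear lin.
Proof.
move=> a u v; rewrite /lin scaler_sumr -big_split; apply: eq_bigr => i _.
by rewrite !mxE scalerDl scalerA.
Qed.
HB.instance Definition _ := GRing.isLinear.Build K _ P _ lin lin_is_linear.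

Lemma quad_is_linear : linear quad.
Proof.
move=> a u v; rewrite /quad scaler_sumr -big_split; apply: eq_bigr => i _.
rewrite scaler_sumr -big_split; apply: eq_bigr => j _.
by rewrite !mxE scalerDl scalerA.
Qed.
HB.instance Definition _ := GRing.isLinear.Build K _ P _ quad quad_is_linear.

Lemma sum_delta (F : 'I_4 -> K) k : \sum_i F i * (i == k)%:R = F k.
Proof.
rewrite (bigD1 k) //= eqxx mulr1 big1 ?addr0 // => i /negbTE ->.
by rewrite mulr0.
Qed.

Lemma sum_delta' (F : 'I_4 -> K) k : \sum_i (k == i)%:R * F i = F k.
Proof.
rewrite -(sum_delta F k); apply: eq_bigr => i _; by rewrite mulrC eq_sym.
Qed.

Lemma mcoeff_lin v k : (lin v)@_U_(k) = v k 0.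
Proof.
rewrite /lin raddf_sum /=.
rewrite -[RHS](sum_delta (fun i => v i 0) k); apply: eq_bigr => i _.
by rewrite mcoeffZ mcoeffXU.
Qed.

Lemma lin_inj : injective lin.
Proof.
move=> u v e; apply/matrixP => i j; rewrite (ord1 j) -!mcoeff_lin; by rewrite e.
Qed.

Lemma d_lin v k : (lin v)^`M(k) = (v k 0)%:MP.
Proof.
rewrite /lin raddf_sum /=.
under eq_bigr => i _ do rewrite mderivZ dX -mul_mpolyC -mpolyCM.
by rewrite -raddf_sum /= sum_delta.
Qed.

Lemma dXX i j k : ('X_i * 'X_j : P)^`M(k) = (i == k)%:R *: 'X_j + (j == k)%:R *: 'X_i.
Proof. by rewrite mderivM !dX mul_mpolyC mulrC mul_mpolyC. Qed.

Lemma d_quad c k : (quad c)^`M(k) = lin (\col_j (c k j + c j k)).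
Proof.
rewrite /quad /lin !raddf_sum /=.
under eq_bigr => i _ do rewrite raddf_sum /=.
under eq_bigr => i _ do under eq_bigr => j _ do
  rewrite mderivZ dXX scalerDr !scalerA.
under eq_bigr => i _ do rewrite big_split /=.
rewrite big_split /=.
under [RHS]eq_bigr => j _ do rewrite mxE scalerDl.
rewrite big_split /=; congr (_ + _).
  rewrite exchange_big /=; apply: eq_bigr => j _.
  by rewrite -scaler_suml (sum_delta (fun i => c i j)).
apply: eq_bigr => i _.
by rewrite -scaler_suml sum_delta.
Qed.

Lemma ap_lin v (f : P) : apolar (lin v) f = \sum_i v i 0 *: f^`M(i).
Proof.
rewrite -[apolar _ _]/(apL f (lin v)); rewrite /lin linear_sum /=.
by apply: eq_bigr => i _; rewrite linearZ /= [apL _ _]apolarXU.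
Qed.

Lemma ap_quad c (f : P) : apolar (quad c) f = \sum_i \sum_j c i j *: f^`M(i)^`M(j).
Proof.
rewrite -[apolar _ _]/(apL f (quad c)); rewrite /quad linear_sum /=.
apply: eq_bigr => i _; rewrite linear_sum /=.
by apply: eq_bigr => j _; rewrite linearZ /= [apL _ _]apolarXX.
Qed.

Lemma hessian_is_linear : linear (@hessian K).
Proof.
move=> a p q; apply/matrixP => i j; rewrite /hessian !mxE.
by rewrite !mderivD !mderivZ mcoeffD mcoeffZ.
Qed.
HB.instance Definition _ := GRing.isLinear.Build K P _ _ (@hessian K) hessian_is_linear.

Lemma hess_quad c : hessian (quad c) = c + c^T.
Proof.
apply/matrixP => i j; rewrite /hessian !mxE d_quad d_lin mxE mcoeffC eqxx mulr1.
by rewrite ?mxE.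
Qed.

Lemma hess_sym (p : P) : (hessian p)^T = hessian p.
Proof. by apply/matrixP => i j; rewrite /hessian !mxE mderiv_comm. Qed.

Lemma lin_homog v : lin v \is 1.-homog.
Proof.
rewrite /lin; apply: rpred_sum => i _; apply: rpredZ.
by rewrite dhomogX /= mdeg1.
Qed.

Lemma quad_homog c : quad c \is 2.-homog.
Proof.
rewrite /quad; apply: rpred_sum => i _; apply: rpred_sum => j _; apply: rpredZ.
by rewrite -mpolyXD dhomogX /= mdegD !mdeg1.
Qed.

Lemma mdeg2P (m : 'X_{1..4}) : mdeg m = 2%N -> exists a b, m = (U_(a) + U_(b))%MM.
Proof.
move=> hm.
have [a ha] : exists a, (0 < m a)%N.
  case: (pickP (fun a => 0 < m a)%N) => [a ha|h0]; first by exists a.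
  by move: hm; rewrite mdegE big1 // => i _; apply/eqP; rewrite -leqn0 leqNgt h0.
have le : (U_(a) <= m)%MM by apply/mnm_lepP => i; rewrite mnm1E; case: eqP => [<-|].
have hm' : mdeg (m - U_(a))%MM == 1%N.
  by move: hm; rewrite -{1}(submK le) mdegD mdeg1 addn1 => -[->].
case/mdeg1P: hm' => b /eqP hb; exists b, a.
by rewrite -hb submK.
Qed.

Lemma hess0 (p : P) : p \is 2.-homog -> hessian p = 0 -> p = 0.
Proof.
move=> hp h0; apply/mpolyP => m; rewrite mcoeff0.
have [/eqP hm|hm] := boolP (mdeg m == 2%N); last exact: (dhomog_nemf_coeff hp).
have [a [b ->]] := mdeg2P hm.
move/matrixP: h0 => /(_ b a); rewrite /hessian !mxE mcoeff_deriv add0m mcoeff_deriv.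
rewrite mnm0E mulr1n -mulr_natr => /eqP; rewrite mulf_eq0.
by case/orP => [/eqP //|]; rewrite (negbTE (natK (U_(a)%MM b))).
Qed.

Definition half : K := (2%:R)^-1.

Lemma half_twice : half + half = 1.
Proof. by rewrite -mulr2n -mulr_natr mulVf // natK. Qed.

Lemma rep2 (p : P) : p \is 2.-homog -> p = quad (half *: hessian p).
Proof.
move=> hp; apply/eqP; rewrite -subr_eq0; apply/eqP; apply: hess0.
  by rewrite rpredB // quad_homog.
rewrite linearB /= hess_quad linearZ /= hess_sym -scalerDl half_twice scale1r.
by rewrite subrr.
Qed.

Lemma rep1 (p : P) : p \is 1.-homog -> p = lin (\col_i p@_U_(i)).
Proof.
move=> hp; apply/mpolyP => m.
have [/eqP hm|hm] := boolP (mdeg m == 1%N); last first.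
  by rewrite (dhomog_nemf_coeff hp) // (dhomog_nemf_coeff (lin_homog _)).
have /mdeg1P [b /eqP ->] : mdeg m == 1%N by rewrite hm.
by rewrite mcoeff_lin mxE.
Qed.

Lemma symE (M : 'M[K]_4) i j : M^T = M -> M i j = M j i.
Proof. by move=> sM; rewrite -{1}sM mxE. Qed.

Definition hrow (M : 'M[K]_4) k : 'cV[K]_4 := \col_j M k j.

Lemma d_quadS M k : M^T = M -> (quad (half *: M))^`M(k) = lin (hrow M k).
Proof.
move=> sM; rewrite d_quad; congr lin; apply/matrixP => i j; rewrite !mxE.
by rewrite [M i k](symE _ _ sM) -mulrDl half_twice mul1r.
Qed.

Lemma ap_lin_quadS v M : M^T = M -> apolar (lin v) (quad (half *: M)) = lin (M *m v).
Proof.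
move=> sM; rewrite ap_lin.
under eq_bigr => i _ do rewrite d_quadS // -linearZ.
rewrite -linear_sum; congr lin; apply/matrixP => i j; rewrite (ord1 j) !mxE summxE.
apply: eq_bigr => k _; rewrite !mxE mulrC.
by rewrite (symE _ _ sM).
Qed.

Lemma ap_lin_lin u v : apolar (lin u) (lin v) = ((u^T *m v) 0 0)%:MP.
Proof.
rewrite ap_lin !mxE raddf_sum /=; apply: eq_bigr => i _.
by rewrite d_lin -mul_mpolyC -mpolyCM mxE.
Qed.

Lemma lin_mul u v : lin u * lin v = quad (u *m v^T).
Proof.
rewrite /lin /quad mulr_suml; apply: eq_bigr => i _.
rewrite mulr_sumr; apply: eq_bigr => j _.
rewrite -scalerAl -scalerAr scalerA !mxE big_ord1 !mxE.
by rewrite mulrC.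
Qed.

Lemma two_neq0 : (2%:R : K) != 0.
Proof. exact: (natK 1). Qed.

Lemma d2q2 M i j : M^T = M ->
  ((quad (half *: M))^+2)^`M(i)^`M(j) =
  ((2%:R * M i j) *: quad (half *: M) + 2%:R *: (lin (hrow M i) * lin (hrow M j))).
Proof.
move=> sM; rewrite expr2 mderivM d_quadS // mderivD !mderivM d_lin d_quadS // !mxE.
rewrite -!mul_mpolyC mpolyCM rmorph_nat.
set q := quad _; set Li := lin _; set Lj := lin _.
ring.
Qed.

Lemma ap_q2 A M : A^T = A -> M^T = M ->
  apolar (quad (half *: A)) ((quad (half *: M))^+2) =
  quad (M *m A *m M + (half * \tr (A *m M)) *: M).
Proof.
move=> sA sM; rewrite ap_quad.
under eq_bigr => i _ do under eq_bigr => j _ do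
  rewrite d2q2 // scalerDr !scalerA lin_mul -!linearZ -linearD.
under eq_bigr => i _ do rewrite -linear_sum.
rewrite -linear_sum; congr quad; apply/matrixP => a b.
rewrite summxE; under eq_bigr => k _ do rewrite summxE.
under eq_bigr => k _ do under eq_bigr => i _ do rewrite /= !mxE big_ord1 !mxE.
have e : forall k i, half * (half * A k i * (2 * M k i) * M a b) +
    M k a * (half * A k i * 2 * M i b) =
    half * (A k i * M i k) * M a b + M a k * A k i * M i b.
  move=> k i; rewrite [M k i](symE _ _ sM) [M k a](symE _ _ sM) /half.
  by field; exact: two_neq0.
under eq_bigr => k _ do under eq_bigr => i _ do rewrite e.
under eq_bigr => k _ do rewrite big_split /=.
rewrite big_split /= !mxE addrC; congr (_ + _).
  under [RHS]eq_bigr => j _ do rewrite mxE mulr_suml.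
  by rewrite exchange_big.
under eq_bigr => k _ do rewrite -mulr_suml -mulr_sumr.
rewrite -mulr_suml -mulr_sumr /mxtrace; congr (_ * _ * _).
by apply: eq_bigr => k _; rewrite mxE.
Qed.

Lemma d2l2 w i j :
  ((lin w)^+2)^`M(i)^`M(j) = (2%:R * w i 0 * w j 0)%:MP.
Proof.
rewrite expr2 mderivM !d_lin mderivD !mderivM !d_lin !dC.
rewrite !mpolyCM rmorph_nat; ring.
Qed.

Lemma quadform_sum (A : 'M[K]_4) (w : 'cV[K]_4) :
  (w^T *m A *m w) 0 0 = \sum_i \sum_j A i j * w i 0 * w j 0.
Proof.
rewrite !mxE exchange_big /=; apply: eq_bigr => i _.
rewrite mxE mulr_suml; apply: eq_bigr => j _.
by rewrite !mxE; ring.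
Qed.

Lemma scaleC a c : a *: (c%:MP : P) = (a * c)%:MP.
Proof. by rewrite -(mul_mpolyC a (c%:MP)) mpolyCM. Qed.

Lemma ap_l2 A w : A^T = A ->
  apolar (quad (half *: A)) ((lin w)^+2) = ((w^T *m A *m w) 0 0)%:MP.
Proof.
move=> sA; rewrite ap_quad.
under eq_bigr => i _ do under eq_bigr => j _ do
  rewrite d2l2 scaleC.
under eq_bigr => i _ do rewrite -raddf_sum.
rewrite -raddf_sum quadform_sum; congr (_%:MP).
apply: eq_bigr => i _; apply: eq_bigr => j _.
rewrite !mxE /half; field; exact: two_neq0.
Qed.

Lemma eval_quad c (v : 'cV[K]_4) :
  (quad c).@[fun i => v i 0] = (v^T *m c *m v) 0 0.
Proof.
rewrite quadform_sum /quad raddf_sum; apply: eq_bigr => i _.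
rewrite raddf_sum; apply: eq_bigr => j _.
by rewrite /= mevalZ mevalM !mevalXU mulrA.
Qed.

Lemma quad_inj_sym X Y : X^T = X -> Y^T = Y -> quad X = quad Y -> X = Y.
Proof.
move=> sX sY e; have := congr1 (@hessian K) e; rewrite !hess_quad sX sY.
move/(congr1 (fun Z => half *: Z)); rewrite /= !scalerDr -!scalerDl half_twice !scale1r.
by [].
Qed.

Lemma mx_ext (X : 'M[K]_4) : (forall v : 'cV[K]_4, X *m v = v) -> X = 1%:M.
Proof.
move=> h; apply/matrixP => i j.
have := congr1 (fun Z : 'cV_4 => Z i 0) (h (delta_mx j 0)).
by rewrite -colE !mxE andbT.
Qed.

Variable q : P.
Hypothesis hq : quad_rank4 q.

Definition Hq := hessian q.
Definition Gq := invmx Hq.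

Lemma Hsym : Hq^T = Hq.
Proof. exact: hess_sym. Qed.

Lemma Hunit : Hq \in unitmx.
Proof. by rewrite -row_free_unit /row_free; case: hq => _ ->. Qed.

Lemma GH : Gq *m Hq = 1%:M.
Proof. exact: (mulVmx Hunit). Qed.

Lemma HG : Hq *m Gq = 1%:M.
Proof. exact: (mulmxV Hunit). Qed.

Lemma Gsym : Gq^T = Gq.
Proof. by rewrite /Gq trmx_inv Hsym. Qed.

Lemma qE : q = quad (half *: Hq).
Proof. by case: hq => h _; exact: rep2. Qed.

Lemma qinv_spec0 (g : P) :
  (g \is 2.-homog /\
   (forall l : P, l \is 1.-homog -> apolar (apolar l g) q = l) /\
   (forall h : P, h \is 1.-homog -> apolar (apolar h q) g = h)) <->
  g = quad (half *: Gq).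
Proof.
split.
  case=> hg [_ h2].
  have sg := hess_sym g.
  have e : forall v : 'cV[K]_4, hessian g *m Hq *m v = v.
    move=> v; apply: lin_inj; rewrite -(h2 (lin v) (lin_homog v)).
    rewrite {1}qE (ap_lin_quadS v Hsym) [in RHS](rep2 hg) (ap_lin_quadS _ sg).
    by rewrite mulmxA.
  have e1 := mx_ext e.
  rewrite [LHS](rep2 hg); congr (quad (_ *: _)).
  by rewrite -[hessian g]mulmx1 -HG mulmxA e1 mul1mx.
move=> ->; split; first exact: quad_homog.
split => l hl; rewrite (rep1 hl).
  rewrite (ap_lin_quadS _ Gsym) {1}qE (ap_lin_quadS _ Hsym).
  by rewrite mulmxA HG mul1mx.
rewrite {1}qE (ap_lin_quadS _ Hsym) (ap_lin_quadS _ Gsym).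
by rewrite mulmxA GH mul1mx.
Qed.

Lemma qinvE : qinv q = quad (half *: Gq).
Proof.
apply/qinv_spec0; rewrite /qinv.
match goal with |- context [ClassicalEpsilon.epsilon ?i ?Pr] =>
  have := @ClassicalEpsilon.epsilon_spec _ i Pr end.
by apply; exists (quad (half *: Gq)); apply/qinv_spec0.
Qed.

Section Ql.
Variable V : 'cV[K]_4.
Definition c1 := (V^T *m Gq *m V) 0 0.
Definition k1 := c1 / 6%:R.
Definition A0 := Gq *m V *m V^T *m Gq - k1 *: Gq.

Lemma A0sym : A0^T = A0.
Proof.
rewrite /A0 linearB /= linearZ /= Gsym !trmx_mul trmxK Gsym !mulmxA.
by [].
Qed.

Lemma trGVV : \tr (Gq *m V *m V^T) = c1.
Proof.
by rewrite mxtrace_mulC /mxtrace big_ord1 /c1 mulmxA.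

Qed.

Lemma e1 : Hq *m A0 *m Hq = V *m V^T - k1 *: Hq.
Proof.
rewrite /A0 mulmxBr mulmxBl -scalemxAr -scalemxAl !mulmxA HG mul1mx.
by rewrite -!mulmxA GH mulmx1 mul1mx.
Qed.

Lemma e2 : \tr (A0 *m Hq) = c1 - k1 * 4%:R.
Proof.
rewrite /A0 mulmxBl raddfB /= -scalemxAl mxtraceZ GH mxtrace1.
by rewrite -!mulmxA GH mulmx1 !mulmxA trGVV.
Qed.

Lemma three_neq0 : (3%:R : K) != 0.
Proof. exact: (natK 2). Qed.
Lemma six_neq0 : (6%:R : K) != 0.
Proof. exact: (natK 5). Qed.

Lemma ql_exists : apolar (quad (half *: A0)) (q ^+ 2) = (lin V) ^+ 2.
Proof.
rewrite [in LHS]qE (ap_q2 A0sym Hsym) expr2 lin_mul; congr quad.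
rewrite e1 e2 -addrA [- _ + _]addrC -scalerBl.
have -> : half * (c1 - k1 * 4%:R) - k1 = 0.
  by rewrite /k1 /half; field; rewrite two_neq0 six_neq0.
by rewrite scale0r addr0.
Qed.

Lemma ql_spec (g : P) : g \is 2.-homog -> apolar g (q ^+ 2) = (lin V) ^+ 2 ->
  g = quad (half *: A0).
Proof.
move=> hg e; set A := hessian g.
have sA : A^T = A := hess_sym g.
move: e; rewrite [in LHS](rep2 hg) -/A [in LHS]qE (ap_q2 sA Hsym) expr2 lin_mul.
set t := \tr (A *m Hq).
move/quad_inj_sym => E.
have {}E : Hq *m A *m Hq + (half * t) *: Hq = V *m V^T.
  apply: E.
    rewrite linearD /= linearZ /= Hsym !trmx_mul Hsym sA mulmxA.
    by [].
  by rewrite trmx_mul trmxK.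
have EA : A = Gq *m V *m V^T *m Gq - (half * t) *: Gq.
  have -> : Gq *m V *m V^T *m Gq = Gq *m (V *m V^T) *m Gq by rewrite !mulmxA.
  rewrite -E mulmxDr mulmxDl -scalemxAr -scalemxAl GH mul1mx addrK.
  by rewrite !mulmxA GH mul1mx -!mulmxA HG mulmx1.

have Et : t = c1 - (half * t) * 4%:R.
  rewrite {1}/t EA mulmxBl raddfB /= -scalemxAl mxtraceZ GH mxtrace1.
  by rewrite -!mulmxA GH mulmx1 !mulmxA trGVV.
have Ek : half * t = k1.
  have hc : c1 = t + half * t * 4%:R by rewrite [X in X + _]Et subrK.
  rewrite /k1 hc /half; field; by rewrite two_neq0 six_neq0.
by rewrite [LHS](rep2 hg) -/A EA Ek.
Qed.

Lemma q_lE : q_l q (lin V) = quad (half *: A0).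
Proof.
rewrite /q_l.
match goal with |- context [ClassicalEpsilon.epsilon ?i ?Pr] =>
  have := @ClassicalEpsilon.epsilon_spec _ i Pr end.
case.
  exists (quad (half *: A0)); split; first exact: quad_homog.
  exact: ql_exists.
move=> h1 h2; exact: ql_spec.
Qed.
End Ql.

Lemma entryB (X Y : 'M[K]_1) a : (X - a *: Y) 0 0 = X 0 0 - a * Y 0 0.
Proof. by rewrite !mxE. Qed.

Lemma entry11 (X Y : 'M[K]_1) : (X *m Y) 0 0 = X 0 0 * Y 0 0.
Proof. by rewrite mxE big_ord1. Qed.

Lemma sform_sym (V W : 'cV[K]_4) : (W^T *m Gq *m V) 0 0 = (V^T *m Gq *m W) 0 0.
Proof.
transitivity ((W^T *m Gq *m V)^T 0 0); first by rewrite [RHS]mxE.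
by rewrite !trmx_mul trmxK Gsym mulmxA.
Qed.

Lemma main (l1 l2 : P) :
  l1 \is 1.-homog -> l2 \is 1.-homog ->
  apolar (q_l q l1) (l2 ^+ 2) = 0 ->
  (apolar (p_l q l2) l1 = 0 /\ apolar (p_l q l1) l2 = 0) <->
  (in_Qinv q l1 \/ in_Qinv q l2).
Proof.
move=> h1 h2.
have [V ->] : exists V, l1 = lin V by exists (\col_i l1@_U_(i)); exact: rep1.
have [W ->] : exists W, l2 = lin W by exists (\col_i l2@_U_(i)); exact: rep1.
rewrite /p_l /in_Qinv qinvE q_lE (ap_l2 _ (A0sym V)).
rewrite !(ap_lin_quadS _ Gsym) !ap_lin_lin.
rewrite !(meval_eq _ (fun i => mcoeff_lin _ i)) !eval_quad.
have eA : (W^T *m A0 V *m W) 0 0 =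
    (V^T *m Gq *m W) 0 0 * (V^T *m Gq *m W) 0 0 - k1 V * c1 W.
  have -> : W^T *m A0 V *m W =
      (W^T *m Gq *m V) *m (V^T *m Gq *m W) - k1 V *: (W^T *m Gq *m W).
    by rewrite /A0 mulmxBr mulmxBl -scalemxAr -scalemxAl !mulmxA.
  by rewrite entryB entry11 sform_sym.
have e3 : forall X Y : 'cV[K]_4, ((Gq *m X)^T *m Y) 0 0 = (X^T *m Gq *m Y) 0 0.
  by move=> X Y; rewrite trmx_mul Gsym.
have e4 : forall X : 'cV[K]_4, (X^T *m (half *: Gq) *m X) 0 0 = half * c1 X.
  by move=> X; rewrite -scalemxAr -scalemxAl mxE.
rewrite eA !e3 !e4 [(W^T *m _ *m _) 0 0]sform_sym.
set s := (V^T *m Gq *m W) 0 0.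
move/eqP; rewrite mpolyC_eq0 subr_eq0 => /eqP es.
have hh : half != 0 by rewrite invr_eq0 two_neq0.
split.
  case=> /eqP; rewrite mpolyC_eq0 => /eqP s0 _.
  move: es; rewrite s0 mulr0 /k1 => /esym /eqP.
  rewrite !mulf_eq0 invr_eq0 (negbTE six_neq0) orbF.
  by case/orP => /eqP ->; [left|right]; rewrite mulr0.
move=> hc.
have : s * s = 0.
  rewrite es /k1; case: hc => /eqP; rewrite mulf_eq0 (negbTE hh) /= => /eqP ->;
  by rewrite ?mul0r ?mulr0.
move/eqP; rewrite mulf_eq0 orbb => /eqP ->.
by rewrite mpolyC0.
Qed.
End Work.

Unset Implicit Arguments.

Theorem lemma4p11 (R : rcfType) (q l1 l2 : {mpoly R[i][4]}) :
  quad_rank4 q ->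
  l1 \is 1.-homog -> l1 != 0 ->
  l2 \is 1.-homog -> l2 != 0 ->
  apolar (q_l q l1) (l2 ^+ 2) = 0 ->
  (apolar (p_l q l2) l1 = 0 /\ apolar (p_l q l1) l2 = 0) <->
  (in_Qinv q l1 \/ in_Qinv q l2).
Proof.
move=> hq h1 _ h2 _.
have natK : forall n : nat, (n.+1)%:R != 0 :> R[i] by move=> n; rewrite pnatr_eq0.
exact: (main natK hq h1 h2).
Qed.
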